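(* Let $\nu\in\mathbb C$, let $I\subset\mathbb R$ be an open interval, and let $a:I\to\mathbb C$ be twice differentiable, nowhere zero, and satisfy $$4a^3\ddot a=(3a^4+2ta^2-\nu)(a^4+2ta^2+\nu).$$ Let $\epsilon\in\{+1,-1\}$ and put $Y=\frac{\nu}{2a^2}-\frac{a^2}{2}-t-\epsilon\frac{\dot a}{a}$. If $y:I\to\mathbb C$ is twice differentiable, nowhere zero, with $y^2=Y$, then $$2y\dot y=-\epsilon\big(\nu+\epsilon-2a^2y^2-y^4-2ty^2\big),$$ and $y$ satisfies the same equation with $\nu$ replaced by $\nu+\epsilon$: $$4y^3\ddot y=(3y^4+2ty^2-(\nu+\epsilon))(y^4+2ty^2+\nu+\epsilon).$$
   Context: Dots denote $d/dt$. *)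

(* Defs.v *)
From Stdlib Require Import Reals.
From Coquelicot Require Import Coquelicot.

Definition rbar_open_interval (l u : Rbar) (t : R) : Prop :=
  Rbar_lt l t /\ Rbar_lt t u.

Definition twice_deriv_on (I : R -> Prop) (f f1 f2 : R -> C) : Prop :=
  forall t, I t -> is_derive f t (f1 t) /\ is_derive f1 t (f2 t).

(* Main.v *)
Require Import Defs.
From Stdlib Require Import Reals.
From Coquelicot Require Import Coquelicot.
Open Scope C_scope.
Notation CNM := (prod_NormedModule R_AbsRing R_NormedModule R_NormedModule).
Notation CDer := (@is_derive R_AbsRing CNM).
Lemma CD_fst (f : R -> C) x l : CDer f x l -> is_derive (fun t => fst (f t)) x (fst l).
Proof.
  intros H. unfold is_derive in *.
  apply (filterdiff_ext_lin _ (fun y : R => fst (scal y l))).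
  - apply (filterdiff_comp' f (fun c : prod_NormedModule R_AbsRing R_NormedModule R_NormedModule => fst c) x (fun y => scal y l) (fun c => fst c) H).
    apply filterdiff_linear, is_linear_fst.
  - intros; reflexivity.
Qed.
Lemma CD_snd (f : R -> C) x l : CDer f x l -> is_derive (fun t => snd (f t)) x (snd l).
Proof.
  intros H. unfold is_derive in *.
  apply (filterdiff_ext_lin _ (fun y : R => snd (scal y l))).
  - apply (filterdiff_comp' f (fun c : prod_NormedModule R_AbsRing R_NormedModule R_NormedModule => snd c) x (fun y => scal y l) (fun c => snd c) H).
    apply filterdiff_linear, is_linear_snd.
  - intros; reflexivity.
Qed.
Lemma CD_pair (g1 g2 : R -> R) x d1 d2 : is_derive g1 x d1 -> is_derive g2 x d2 ->
  CDer (fun t => (g1 t, g2 t) : C) x (d1, d2).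
Proof.
  intros H1 H2. unfold is_derive in *.
  apply (filterdiff_ext_lin _ (fun y : R => ((scal y d1 : R), (scal y d2 : R)) : prod_NormedModule R_AbsRing R_NormedModule R_NormedModule)).
  - apply (filterdiff_comp'_2 g1 g2 (fun u v => (u, v) : prod_NormedModule R_AbsRing R_NormedModule R_NormedModule) x _ _ (fun u v => (u,v)) H1 H2).
    apply (filterdiff_ext_lin _ (fun t => t)).
    2: intros [u v]; reflexivity.
    apply (filterdiff_ext (fun t => t)).
    intros [u v]; reflexivity.
    apply filterdiff_linear, is_linear_id.
  - intros; reflexivity.
Qed.
Lemma CD_val (f : R -> C) (x : R) (l l' : C) : CDer f x l -> l = l' -> CDer f x l'.
Proof. intros H ->; exact H. Qed.

Lemma CD_mult (f g : R -> C) (x:R) (df dg : C) : CDer f x df -> CDer g x dg ->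
  CDer (fun t => f t * g t) x (df * g x + f x * dg).
Proof.
  intros Hf Hg.
  pose proof (CD_fst _ _ _ Hf) as f1. pose proof (CD_snd _ _ _ Hf) as f2.
  pose proof (CD_fst _ _ _ Hg) as g1. pose proof (CD_snd _ _ _ Hg) as g2.
  pose proof (is_derive_minus _ _ x _ _ (is_derive_mult _ _ x _ _ f1 g1 Rmult_comm) (is_derive_mult _ _ x _ _ f2 g2 Rmult_comm)) as A.
  pose proof (is_derive_plus _ _ x _ _ (is_derive_mult _ _ x _ _ f1 g2 Rmult_comm) (is_derive_mult _ _ x _ _ f2 g1 Rmult_comm)) as B.
  pose proof (CD_pair _ _ _ _ _ A B) as P.
  eapply CD_val. eapply is_derive_ext. 2: exact P.
  - intros t. reflexivity.
  - apply injective_projections; simpl; unfold minus, plus, opp, mult; simpl; ring.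
Qed.

Lemma CD_plus (f g : R -> C) (x:R) (df dg : C) : CDer f x df -> CDer g x dg ->
  CDer (fun t => f t + g t) x (df + dg).
Proof. intros; apply (is_derive_plus f g); auto. Qed.
Lemma CD_minus (f g : R -> C) (x:R) (df dg : C) : CDer f x df -> CDer g x dg ->
  CDer (fun t => f t - g t) x (df - dg).
Proof. intros; apply (is_derive_minus f g); auto. Qed.
Lemma CD_opp (f : R -> C) (x:R) (df : C) : CDer f x df ->
  CDer (fun t => - f t) x (- df).
Proof. intros; apply (is_derive_opp f); auto. Qed.
Lemma CD_const (c : C) (x:R) : CDer (fun _ => c) x (RtoC 0).
Proof. apply (is_derive_const (K:=R_AbsRing) (V:=CNM) c). Qed.
Lemma CD_RtoC (x:R) : CDer (fun t => RtoC t) x (RtoC 1).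
Proof.
  eapply CD_val. eapply is_derive_ext. 2: apply (CD_pair (fun t => t) (fun _ => 0%R) x _ _ (is_derive_id x) (is_derive_const 0%R x)).
  intros; reflexivity. reflexivity.
Qed.
Lemma CD_unique (f : R -> C) (x:R) l1 l2 : CDer f x l1 -> CDer f x l2 -> l1 = l2.
Proof.
  intros H1 H2. apply injective_projections.
  - pose proof (is_derive_unique _ _ _ (CD_fst _ _ _ H1)) as A.
    pose proof (is_derive_unique _ _ _ (CD_fst _ _ _ H2)) as B. congruence.
  - pose proof (is_derive_unique _ _ _ (CD_snd _ _ _ H1)) as A.
    pose proof (is_derive_unique _ _ _ (CD_snd _ _ _ H2)) as B. congruence.
Qed.

Lemma CD_pow (f : R -> C) (x:R) (df : C) : CDer f x df -> forall n,
  CDer (fun t => f t ^ S n) x (INR (S n) * f x ^ n * df).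
Proof.
  intros H n. induction n as [|n IH].
  - change (fun t => f t ^ 1) with (fun t => f t * 1).
    pose proof (CD_mult f (fun _ => 1) x _ _ H (CD_const 1 x)) as K.
    eapply CD_val. exact K.
    change (f x ^ 0) with (RtoC 1). change (INR 1) with 1%R. cbv beta; ring.
  - change (fun t => f t ^ S (S n)) with (fun t => f t * f t ^ S n).
    pose proof (CD_mult f (fun t => f t ^ S n) x _ _ H IH) as K.
    eapply CD_val. exact K.
    rewrite (S_INR (S n)). change (f x ^ S n) with (f x * f x ^ n).
    rewrite RtoC_plus. cbv beta; ring.
Qed.

Lemma loc_I l u t : rbar_open_interval l u t -> locally t (rbar_open_interval l u).
Proof. intros H. apply (open_and _ _ (open_Rbar_gt l) (open_Rbar_lt u)). exact H. Qed.

Lemma CD_loc_eq (f g : R -> C) (t : R) df dg : locally t (fun s => f s = g s) ->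
  CDer f t df -> CDer g t dg -> df = dg.
Proof. intros L Hf Hg. apply (CD_unique g t); auto. exact (is_derive_ext_loc f g t df L Hf). Qed.

Ltac cder := match goal with
 | |- is_derive (fun _ => ?c) _ _ => apply CD_const
 | |- is_derive (fun s => RtoC s) _ _ => apply CD_RtoC
 | |- is_derive (fun s => @?f s ^ S ?n) _ _ => apply (CD_pow f); cder
 | |- is_derive (fun s => @?f s * @?g s) _ _ => apply (CD_mult f g); cder
 | |- is_derive (fun s => @?f s + @?g s) _ _ => apply (CD_plus f g); cder
 | |- is_derive (fun s => @?f s - @?g s) _ _ => apply (CD_minus f g); cder
 | |- is_derive (fun s => - @?f s) _ _ => apply (CD_opp f); cder
 | |- _ => eassumption
 end.

Ltac cclean := cbv beta; repeat rewrite S_INR; change (INR 0) with 0%R; rewrite ?RtoC_plus.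

Theorem mainTheorem13 (nu : C) (l u : Rbar) (a a1 a2 : R -> C) (eps : R)
  (y y1 y2 : R -> C) :
  Rbar_lt l u ->
  twice_deriv_on (rbar_open_interval l u) a a1 a2 ->
  (forall t, rbar_open_interval l u t -> a t <> 0) ->
  (forall t, rbar_open_interval l u t ->
     4 * a t ^ 3 * a2 t =
     (3 * a t ^ 4 + 2 * RtoC t * a t ^ 2 - nu) * (a t ^ 4 + 2 * RtoC t * a t ^ 2 + nu)) ->
  (eps = 1%R \/ eps = (-1)%R) ->
  twice_deriv_on (rbar_open_interval l u) y y1 y2 ->
  (forall t, rbar_open_interval l u t -> y t <> 0) ->
  (forall t, rbar_open_interval l u t ->
     y t ^ 2 = nu / (2 * a t ^ 2) - a t ^ 2 / 2 - RtoC t - RtoC eps * (a1 t / a t)) ->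
  (forall t, rbar_open_interval l u t ->
     2 * y t * y1 t =
     - RtoC eps * (nu + RtoC eps - 2 * a t ^ 2 * y t ^ 2 - y t ^ 4 - 2 * RtoC t * y t ^ 2))
  /\
  (forall t, rbar_open_interval l u t ->
     4 * y t ^ 3 * y2 t =
     (3 * y t ^ 4 + 2 * RtoC t * y t ^ 2 - (nu + RtoC eps))
       * (y t ^ 4 + 2 * RtoC t * y t ^ 2 + (nu + RtoC eps))).
Proof.
  intros Hlu Ha Ha0 Hode Heps Hy Hy0 HY.
  assert (A1 : forall t, rbar_open_interval l u t ->
    a1 t = RtoC eps * a t * (nu / (2 * a t ^ 2) - a t ^ 2 / 2 - RtoC t - y t ^ 2)).
  { intros t It. rewrite (HY t It). pose proof (Ha0 t It).
    destruct Heps as [-> | ->]; field; auto. }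
  assert (P1 : forall t, rbar_open_interval l u t ->
     2 * y t * y1 t =
     - RtoC eps * (nu + RtoC eps - 2 * a t ^ 2 * y t ^ 2 - y t ^ 4 - 2 * RtoC t * y t ^ 2)).
  { intros t It. destruct (Ha t It) as [Da Da1]. destruct (Hy t It) as [Dy Dy1].
    pose proof (Ha0 t It) as a0.
    assert (E : (2 * a t * a1 t) * y t ^ 2 + a t ^ 2 * (2 * y t * y1 t) =
       - (2 * a t ^ 3 * a1 t) - a t ^ 2 - 2 * RtoC t * a t * a1 t
       - RtoC eps * (a2 t * a t + a1 t * a1 t)).
    { apply (CD_loc_eq (fun s => a s ^ 2 * y s ^ 2)
        (fun s => nu * / 2 - a s ^ 4 * / 2 - RtoC s * a s ^ 2 - RtoC eps * (a1 s * a s)) t).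
      - eapply filter_imp. 2: exact (loc_I _ _ _ It). intros s Is. cbv beta.
        rewrite (HY s Is). pose proof (Ha0 s Is). field. auto.
      - eapply CD_val. cder. cclean. field.
      - eapply CD_val. cder. cclean. field. }
    assert (K : 2 * y t * y1 t = ((- (2 * a t ^ 3 * a1 t) - a t ^ 2 - 2 * RtoC t * a t * a1 t
       - RtoC eps * (a2 t * a t + a1 t * a1 t)) - (2 * a t * a1 t) * y t ^ 2) / (a t ^ 2)).
    { rewrite <- E. field. auto. }
    assert (A2 : a2 t = (3 * a t ^ 4 + 2 * RtoC t * a t ^ 2 - nu) * (a t ^ 4 + 2 * RtoC t * a t ^ 2 + nu) / (4 * a t ^ 3)).
    { rewrite <- (Hode t It). field. auto. }
    rewrite K, A2, (A1 t It).
    destruct Heps as [-> | ->]; field; auto. }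
  split; [exact P1|].
  intros t It. destruct (Ha t It) as [Da Da1]. destruct (Hy t It) as [Dy Dy1].
  pose proof (Ha0 t It) as a0. pose proof (Hy0 t It) as y0.
  assert (E : 2 * y1 t * y1 t + 2 * y t * y2 t =
     - RtoC eps * (- (2 * (2 * a t * a1 t * y t ^ 2 + a t ^ 2 * (2 * y t * y1 t)))
        - 4 * y t ^ 3 * y1 t - 2 * (y t ^ 2 + RtoC t * (2 * y t * y1 t)))).
  { apply (CD_loc_eq (fun s => 2 * y s * y1 s)
      (fun s => - RtoC eps * (nu + RtoC eps - 2 * a s ^ 2 * y s ^ 2 - y s ^ 4 - 2 * RtoC s * y s ^ 2)) t).
    - eapply filter_imp. 2: exact (loc_I _ _ _ It). intros s Is. exact (P1 s Is).
    - eapply CD_val. cder. cclean. field.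
    - eapply CD_val. cder. cclean. field. }
  assert (Y2 : y2 t = (- RtoC eps * (- (2 * (2 * a t * a1 t * y t ^ 2 + a t ^ 2 * (2 * y t * y1 t)))
        - 4 * y t ^ 3 * y1 t - 2 * (y t ^ 2 + RtoC t * (2 * y t * y1 t))) - 2 * y1 t * y1 t) / (2 * y t)).
  { rewrite <- E. field. auto. }
  assert (Y1 : y1 t = - RtoC eps * (nu + RtoC eps - 2 * a t ^ 2 * y t ^ 2 - y t ^ 4 - 2 * RtoC t * y t ^ 2) / (2 * y t)).
  { rewrite <- (P1 t It). field. auto. }
  rewrite Y2, Y1, (A1 t It).
  destruct Heps as [-> | ->]; field; auto.
Qed.
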